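(* Let $f:G\to H$, $f':G'\to H'$, $\varphi':G'\to G$ and $\varphi:H'\to H$ be group homomorphisms with $f\circ\varphi'=\varphi\circ f'$, and suppose this square is a weak pullback. If $\varphi$ is surjective or $f'$ does not admit a global section, then $\mathrm{sec}(f')\leq \mathrm{sec}(f)$.
   Context: The commutative square $f\circ\varphi'=\varphi\circ f'$ is a weak pullback if for every group $L$ and homomorphisms $\alpha:L\to H'$, $\beta:L\to G$ with $\varphi\circ\alpha=f\circ\beta$, there exists a (not necessarily unique) homomorphism $h:L\to G'$ with $f'\circ h=\alpha$ and $\varphi'\circ h=\beta$. For a homomorphism $f:G\to H$ and a subgroup $L\le H$, a local section of $f$ on $L$ is a homomorphism $s:L\to G$ with $f\circ s=\mathrm{incl}_L$ (the inclusion $L\hookrightarrow H$); a global section is a local section on $L=H$. The sectional number $\mathrm{sec}(f)$ is the least positive integer $m$ such that there exist proper subgroups $H_1,\ldots,H_m$ of $H$ with $H=H_1\cup\cdots\cup H_m$ and such that $f$ admits a local section on each $H_i$; $\mathrm{sec}(f)=\infty$ if no such $m$ exists. *)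

(* Defs.v *)
From Stdlib Require Import Arith ClassicalEpsilon.

Record Group : Type := {
  car :> Type;
  gmul : car -> car -> car;
  gone : car;
  ginv : car -> car;
  gmulA : forall x y z, gmul x (gmul y z) = gmul (gmul x y) z;
  gmul1 : forall x, gmul gone x = x;
  gmulV : forall x, gmul (ginv x) x = gone
}.

Arguments gmul {g} _ _.
Arguments gone {g}.
Arguments ginv {g} _.

Definition is_hom {G H : Group} (f : G -> H) : Prop :=
  forall x y : G, f (gmul x y) = gmul (f x) (f y).

Definition is_subgroup {H : Group} (L : H -> Prop) : Prop :=
  L gone /\ (forall x y, L x -> L y -> L (gmul x y)) /\ (forall x, L x -> L (ginv x)).

Definition proper {H : Group} (L : H -> Prop) : Prop := exists x : H, ~ L x.

(* local section of f on the subgroup L: a homomorphism s : L -> G with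
   f (s x) = x for x in L (s is given as a function on H, only its
   restriction to L matters). *)
Definition local_section {G H : Group} (f : G -> H) (L : H -> Prop) (s : H -> G) : Prop :=
  (forall x y, L x -> L y -> s (gmul x y) = gmul (s x) (s y)) /\
  (forall x, L x -> f (s x) = x).

Definition global_section {G H : Group} (f : G -> H) (s : H -> G) : Prop :=
  local_section f (fun _ => True) s.

Definition sec_cover {G H : Group} (f : G -> H) (m : nat) : Prop :=
  0 < m /\
  exists Hs : nat -> H -> Prop,
    (forall i, i < m ->
       is_subgroup (Hs i) /\ proper (Hs i) /\ exists s, local_section f (Hs i) s) /\
    (forall y : H, exists i, i < m /\ Hs i y).

(* k is the sectional number (None = infinity) *)
Definition is_sec {G H : Group} (f : G -> H) (k : option nat) : Prop :=
  match k with
  | Some m => sec_cover f m /\ (forall m', sec_cover f m' -> m <= m')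
  | None => forall m, ~ sec_cover f m
  end.

Definition sec {G H : Group} (f : G -> H) : option nat :=
  epsilon (inhabits None) (fun k => is_sec f k).

Definition ole (a b : option nat) : Prop :=
  match a, b with
  | _, None => True
  | None, Some _ => False
  | Some x, Some y => x <= y
  end.

Definition weak_pullback {G H G' H' : Group}
  (f : G -> H) (f' : G' -> H') (phi' : G' -> G) (phi : H' -> H) : Prop :=
  forall (L : Group) (alpha : L -> H') (beta : L -> G),
    is_hom alpha -> is_hom beta -> (forall x, phi (alpha x) = f (beta x)) ->
    exists h : L -> G', is_hom h /\ (forall x, f' (h x) = alpha x) /\
                        (forall x, phi' (h x) = beta x).

(* Main.v *)
Require Import Defs.
From Stdlib Require Import Arith Lia ClassicalEpsilon Classical ProofIrrelevance.

Section GT.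
Variable K : Group.
Lemma cancel_l (a x y : K) : gmul a x = gmul a y -> x = y.
Proof.
  intro E. rewrite <- (gmul1 K x), <- (gmul1 K y), <- (gmulV K a), <- !gmulA, E. reflexivity.
Qed.
Lemma mulrV (x : K) : gmul x (ginv x) = gone.
Proof.
  assert (Hy : gmul (gmul x (ginv x)) (gmul x (ginv x)) = gmul x (ginv x)).
  { rewrite <- gmulA. rewrite (gmulA K (ginv x) x). rewrite gmulV, gmul1. reflexivity. }
  rewrite <- (gmulV K (gmul x (ginv x))). rewrite <- Hy at 3. rewrite gmulA, gmulV, gmul1. reflexivity.
Qed.
Lemma mulr1 (x : K) : gmul x gone = x.
Proof. rewrite <- (gmulV K x), gmulA, mulrV, gmul1. reflexivity. Qed.
Lemma cancel_r (a x y : K) : gmul x a = gmul y a -> x = y.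
Proof.
  intro E. rewrite <- (mulr1 x), <- (mulr1 y), <- (mulrV a), !gmulA, E. reflexivity.
Qed.
End GT.

Lemma hom1 (A B : Group) (p : A -> B) : is_hom p -> p gone = gone.
Proof.
  intro hp. apply (cancel_l _ (p gone)). rewrite <- hp, gmul1, mulr1. reflexivity.
Qed.
Lemma homV (A B : Group) (p : A -> B) : is_hom p -> forall x, p (ginv x) = ginv (p x).
Proof.
  intros hp x. apply (cancel_r _ (p x)). rewrite <- hp, !gmulV. apply hom1; auto.
Qed.

Lemma sig_eq (A : Type) (P : A -> Prop) (a b : {x | P x}) : proj1_sig a = proj1_sig b -> a = b.
Proof.
  destruct a as [a pa], b as [b pb]; simpl; intro E; subst. f_equal. apply proof_irrelevance.
Qed.

Definition subG (K : Group) (P : K -> Prop) (hP : is_subgroup P) : Group.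
Proof.
  refine (Build_Group {x | P x}
    (fun a b => exist _ (gmul (proj1_sig a) (proj1_sig b))
       (proj1 (proj2 hP) _ _ (proj2_sig a) (proj2_sig b)))
    (exist _ gone (proj1 hP))
    (fun a => exist _ (ginv (proj1_sig a)) (proj2 (proj2 hP) _ (proj2_sig a))) _ _ _);
  intros; apply sig_eq; simpl; [apply gmulA | apply gmul1 | apply gmulV].
Defined.

Lemma min_cover (G H : Group) (f : G -> H) m :
  sec_cover f m -> exists k, is_sec f (Some k) /\ k <= m.
Proof.
  induction m as [m IH] using lt_wf_ind. intro Hm.
  destruct (classic (exists m', m' < m /\ sec_cover f m')) as [[m' [lt Hm']]|N].
  - destruct (IH m' lt Hm') as [k [Hk le]]. exists k; split; auto; lia.
  - exists m; split; [split; auto|lia].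
    intros m' Hm'. destruct (le_lt_dec m m'); auto. exfalso; eauto.
Qed.

Lemma sec_spec (G H : Group) (f : G -> H) : is_sec f (sec f).
Proof.
  unfold sec. apply epsilon_spec.
  destruct (classic (exists m, sec_cover f m)) as [[m Hm]|N].
  - destruct (min_cover _ _ f m Hm) as [k [Hk _]]. eauto.
  - exists None. intros m Hm; apply N; eauto.
Qed.

Theorem theorem3p2 (G H G' H' : Group)
  (f : G -> H) (f' : G' -> H') (phi' : G' -> G) (phi : H' -> H)
  (hf : is_hom f) (hf' : is_hom f') (hphi' : is_hom phi') (hphi : is_hom phi)
  (hcomm : forall x : G', f (phi' x) = phi (f' x))
  (hwp : weak_pullback f f' phi' phi)
  (hcase : (forall y : H, exists x : H', phi x = y) \/
           ~ (exists s : H' -> G', global_section f' s)) :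
  ole (sec f') (sec f).
Proof.
  assert (cov : forall m, sec_cover f m -> sec_cover f' m).
  { intros m [m0 [Hs [HH Hcov]]]. split; auto.
    exists (fun i y => Hs i (phi y)). split.
    2:{ intro y. destruct (Hcov (phi y)) as [i [? ?]]. eauto. }
    intros i Hi. destruct (HH i Hi) as [[g1 [gm gi]] [[y0 Hy0] [s [sm ss]]]].
    assert (sgP : is_subgroup (fun y => Hs i (phi y))).
    { split; [|split].
      - rewrite hom1; auto.
      - intros x y hx hy. rewrite hphi. auto.
      - intros x hx. rewrite homV; auto. }
    assert (LS : exists s', local_section f' (fun y => Hs i (phi y)) s').
    { destruct (hwp (subG H' _ sgP) (fun x : {y | Hs i (phi y)} => proj1_sig x) (fun x : {y | Hs i (phi y)} => s (phi (proj1_sig x))))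
        as [h [hh [h1 h2]]].
      - intros x y. reflexivity.
      - intros [x px] [y py]. simpl. rewrite hphi. apply sm; auto.
      - intros [x px]. simpl. rewrite ss; auto.
      - exists (fun y => match excluded_middle_informative (Hs i (phi y)) with
                         | left p => h (exist _ y p) | right _ => gone end).
        split.
        + intros x y px py.
          destruct (excluded_middle_informative (Hs i (phi (gmul x y)))) as [pxy|n];
            [|exfalso; apply n; rewrite hphi; auto].
          destruct (excluded_middle_informative (Hs i (phi x))) as [px'|n]; [|tauto].
          destruct (excluded_middle_informative (Hs i (phi y))) as [py'|n]; [|tauto].
          rewrite <- hh. f_equal. apply sig_eq. reflexivity.
        + intros x px.
          destruct (excluded_middle_informative (Hs i (phi x))) as [px'|n]; [|tauto].
          rewrite h1. reflexivity. }
    split; [exact sgP|split; [|exact LS]].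
    destruct hcase as [surj | nog].
    - destruct (surj y0) as [x Hx]. exists x. rewrite Hx. auto.
    - apply NNPP. intro np. apply nog. destruct LS as [s' [l1 l2]]. exists s'.
      split; intros; [apply l1|apply l2]; apply NNPP; intro Hn; apply np; eexists; exact Hn. }
  pose proof (sec_spec _ _ f) as S. pose proof (sec_spec _ _ f') as S'.
  destruct (sec f) as [m|]; destruct (sec f') as [k|]; simpl; auto.
  - destruct S as [Sm _]. destruct S' as [_ Smin]. apply Smin, cov, Sm.
  - destruct S as [Sm _]. apply (S' m), cov, Sm.
Qed.
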